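(* Let $\mathcal V$ be a finite set of agents, $\mathcal L\subseteq\mathcal V$ a set of leaders, $\overline\pi\in\mathbb N_{\geq 1}$, and $\delta\geq 0$ an integer bound on communication delays. For each time $t\in\mathbb N$ let $\mathcal N_i^t\subseteq\mathcal V$ be the in-neighborhood of agent $i$ (with $i\in\mathcal N_i^t$), and let $\mathcal E^t=\{(j,i): j\in\mathcal N_i^t\}$. Hierarchy levels $\pi_i^t\in\{0,1,\dots,\overline\pi\}$ evolve as follows: $\pi_\ell^t=0$ for all $t$ and all $\ell\in\mathcal L$; for each follower $i\in\mathcal V\setminus\mathcal L$, $\pi_i^0=\overline\pi$ and for $t\geq 1$ $$\pi_i^t=\min\Bigl\{\overline\pi,\;1+\min_{j\in\mathcal N_i^t\setminus\{i\}}\pi_j^{\,t-\delta^t_{j|i}-1}\Bigr\},$$ where $\delta^t_{j|i}\in\{0,\dots,\delta\}$ is the delay with which $i$ receives $j$'s information at time $t$ (with $t-\delta^t_{j|i}-1\geq 0$), and the inner minimum over an empty set is $+\infty$. Let $D\in\{0,1,\dots,\overline\pi\}$ and let $\bar t\geq(\delta+1)D$ be such that $\mathcal E^s=\mathcal E^{\bar t}$ for all $s$ with $\bar t-(\delta+1)D\leq s\leq\bar t$. Then for every agent $i\in\mathcal V$, $$\pi_i^{\bar t}=D_i^{\mathcal E^{\bar t}}\quad\text{if } D_i^{\mathcal E^{\bar t}}\leq D,\qquad \pi_i^{\bar t}>D\quad\text{otherwise}.$$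
   Context: For a directed graph $(\mathcal V,\mathcal E)$ whose edge $(j,i)\in\mathcal E$ means that $j$ is an in-neighbor of $i$ (i.e., information flows from $j$ to $i$), the graph distance from a leader $\ell$ to agent $i$ is the smallest $\eta\geq 0$ such that there is a sequence $\ell=j_0,j_1,\dots,j_\eta=i$ with $(j_{k},j_{k+1})\in\mathcal E$ for all $k<\eta$ (it is $+\infty$ if no such sequence exists, and $0$ iff $i=\ell$). The exact hierarchy level of $i$ with respect to $\mathcal E$ is $D_i^{\mathcal E}=\min\{\overline\pi,\ \min_{\ell\in\mathcal L}\operatorname{dist}^{\mathcal E}(\ell,i)\}$. (In the paper's application the connectivity is proximity-based and hence symmetric, so the direction of paths is immaterial there.) *)

(* Defs.v *)
From mathcomp Require Import all_boot.
Set Implicit Arguments. Unset Strict Implicit. Unset Printing Implicit Defensive.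

Definition edge_rel (V : finType) (N : nat -> V -> {set V}) (t : nat) : rel V :=
  fun j i => j \in N t i.

Definition walk_len (V : finType) (e : rel V) (x y : V) (eta : nat) : bool :=
  [exists p : eta.-tuple V, path e x p && (last x p == y)].

Definition leader_reach (V : finType) (e : rel V) (L : {set V}) (i : V) (eta : nat) : bool :=
  [exists l in L, walk_len e l i eta].

(* Exact hierarchy level  D_i^E = min{ pibar, min_{l in L} dist^E(l,i) }.
   Since dist is the least eta admitting a walk, and only values <= pibar
   matter in the outer min, this is the min of pibar and all eta <= pibar
   for which some leader reaches i in eta steps. *)
Definition hier_level (V : finType) (e : rel V) (L : {set V}) (pibar : nat) (i : V) : nat :=
  \big[minn/pibar]_(eta < pibar.+1 | leader_reach e L i eta) (eta : nat).

(* Main.v *)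
Require Import Defs.
From mathcomp Require Import all_boot.
From mathcomp Require Import zify.
Set Implicit Arguments. Unset Strict Implicit. Unset Printing Implicit Defensive.

Lemma bigmin_le (I : eqType) (r : seq I) (Pr : pred I) (F : I -> nat) x0 j :
  j \in r -> Pr j -> \big[minn/x0]_(i <- r | Pr i) F i <= F j.
Proof.
elim: r => [//|a r IH]; rewrite inE big_cons => /orP [/eqP<- ->|jr Pj].
  exact: geq_minl.
case: (Pr a); last exact: IH.
by apply: leq_trans (geq_minr _ _) _; apply: IH.
Qed.

Lemma bigmin_le_idx (I : eqType) (r : seq I) (Pr : pred I) (F : I -> nat) x0 :
  \big[minn/x0]_(i <- r | Pr i) F i <= x0.
Proof.
elim: r => [|a r IH]; rewrite ?big_nil // big_cons.
by case: (Pr a) => //; apply: leq_trans (geq_minr _ _) IH.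
Qed.

Lemma bigmin_attained (I : eqType) (r : seq I) (Pr : pred I) (F : I -> nat) x0 :
  \big[minn/x0]_(i <- r | Pr i) F i = x0 \/
  exists i, Pr i /\ \big[minn/x0]_(i <- r | Pr i) F i = F i.
Proof.
apply: (big_ind (fun x => x = x0 \/ exists i, Pr i /\ x = F i)).
- by left.
- by move=> x y Hx Hy /=; case: leqP.
- by move=> i Pi; right; exists i.
Qed.

Lemma walk0 (V : finType) (e : rel V) x y : walk_len e x y 0 -> x = y.
Proof. by case/existsP=> [[[|a s] //=]] _ /eqP. Qed.

Lemma walk_refl (V : finType) (e : rel V) x : walk_len e x x 0.
Proof. apply/existsP. exists (@Tuple 0 V [::] isT). by rewrite /= eqxx. Qed.

Lemma walk_snoc (V : finType) (e : rel V) x y z n :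
  walk_len e x y n -> e y z -> walk_len e x z n.+1.
Proof.
case/existsP=> p /andP [Hp /eqP Hl] Hyz.
have Hs : size (rcons p z) == n.+1 by rewrite size_rcons size_tuple.
apply/existsP; exists (Tuple Hs) => /=.
by rewrite rcons_path Hp Hl Hyz last_rcons eqxx.
Qed.

Lemma walk_unsnoc (V : finType) (e : rel V) x y n :
  walk_len e x y n.+1 -> exists z, walk_len e x z n /\ e z y.
Proof.
case/existsP=> [[p Hs]] /= /andP [Hp /eqP Hl].
move: Hs Hp Hl; case/lastP: p => [//|q a].
rewrite size_rcons eqSS rcons_path last_rcons => Hs /andP [Hq Ha] Hal.
exists (last x q); split; last by rewrite -Hal.
by apply/existsP; exists (Tuple Hs) => /=; rewrite Hq eqxx.
Qed.

Section H.
Variables (V : finType) (e : rel V) (L : {set V}) (pibar : nat).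
Hypothesis Hpib : 1 <= pibar.
Local Notation h := (hier_level e L pibar).

Lemma h_le i : h i <= pibar.
Proof.
rewrite /hier_level; apply: (big_ind (fun x => x <= pibar)) => //.
- by move=> x y Hx _; apply: leq_trans (geq_minl _ _) Hx.
- by move=> k _; rewrite -ltnS.
Qed.

Lemma h_reach i (k : 'I_pibar.+1) : leader_reach e L i k -> h i <= k.
Proof. by move=> Hk; apply: bigmin_le => //; rewrite mem_index_enum. Qed.

Lemma h_att i : h i < pibar -> exists k : 'I_pibar.+1, leader_reach e L i k /\ h i = k.
Proof.
rewrite /hier_level; case: (bigmin_attained (index_enum 'I_pibar.+1) (fun k : 'I_pibar.+1 => leader_reach e L i k) (fun k : 'I_pibar.+1 => (k : nat)) pibar) => [->|[k [Pk ->]]].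
  by rewrite ltnn.
by move=> _; exists k.
Qed.

Lemma hL i : i \in L -> h i = 0.
Proof.
move=> Hi; apply/eqP; rewrite -leqn0.
apply: (@h_reach i (Ordinal (ltn0Sn pibar))).
by apply/existsP; exists i; rewrite Hi walk_refl.
Qed.

Lemma h0L i : h i = 0 -> i \in L.
Proof.
move=> H; have [|k [Hk Hh]] := h_att (i:=i); first by rewrite H.
move: Hk; rewrite -Hh H => /existsP [l /andP [Hl /walk0 <-]] //.
Qed.

Lemma hedge j i : e j i -> h i <= (h j).+1.
Proof.
move=> Hji; have := h_le j; rewrite leq_eqVlt => /orP [/eqP->|Hlt].
  by apply: leq_trans (h_le i) _.
have [k [Hk Hh]] := h_att Hlt.
have Hk1 : k.+1 < pibar.+1 by rewrite ltnS -Hh.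
rewrite Hh; apply: (@h_reach i (Ordinal Hk1)) => /=.
case/existsP: Hk => l /andP [Hl Hw]; apply/existsP; exists l.
by rewrite Hl (walk_snoc Hw Hji).
Qed.

Lemma hpred i : i \notin L -> h i < pibar ->
  exists j, j != i /\ e j i /\ (h j).+1 <= h i.
Proof.
move=> HiL Hlt; have [k [Hk Hh]] := h_att Hlt.
case/existsP: Hk => l /andP [Hl Hw].
move: Hw Hh; case: k => [[|n] Hn] /= Hw Hh.
  by move: HiL; rewrite -(walk0 Hw) Hl.
have [z [Hz Hzi]] := walk_unsnoc Hw.
have Hn' : n < pibar.+1 by apply: ltnW.
have Hhz : h z <= n.
  by apply: (@h_reach z (Ordinal Hn')); apply/existsP; exists l; rewrite Hl.
exists z; split; last by split; rewrite // Hh.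
apply/eqP=> Ezi; subst z.
by move: Hhz; rewrite Hh ltnn.
Qed.
End H.

Theorem mainTheorem1
  (V : finType) (L : {set V}) (pibar delta : nat)
  (N : nat -> V -> {set V})
  (dl : nat -> V -> V -> nat)       (* dl t j i = delay delta^t_{j|i} *)
  (pi : nat -> V -> nat)            (* pi t i = hierarchy level pi_i^t *)
  (D tbar : nat) :
  1 <= pibar ->
  (forall t i, i \in N t i) ->
  (forall t i j, 1 <= t -> j \in N t i :\ i -> dl t j i <= delta /\ dl t j i < t) ->
  (forall t l, l \in L -> pi t l = 0) ->
  (forall i, i \notin L -> pi 0 i = pibar) ->
  (forall t i, i \notin L -> 1 <= t ->
     pi t i = \big[minn/pibar]_(j in N t i :\ i) (pi (t - dl t j i - 1) j).+1) ->
  D <= pibar ->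
  (delta.+1 * D <= tbar) ->
  (forall s, tbar - delta.+1 * D <= s <= tbar ->
     forall j i, edge_rel N s j i = edge_rel N tbar j i) ->
  forall i : V,
    (hier_level (edge_rel N tbar) L pibar i <= D ->
       pi tbar i = hier_level (edge_rel N tbar) L pibar i) /\
    (D < hier_level (edge_rel N tbar) L pibar i -> D < pi tbar i).
Proof.
move=> Hpib HNi Hdl HL H0 Hrec HD Htb Hwin.
set e := edge_rel N tbar.
set h := hier_level e L pibar.
have pi_le : forall t i, pi t i <= pibar.
  move=> t i; case: (boolP (i \in L)) => Hi; first by rewrite HL.
  case: t => [|n]; first by rewrite H0.
  by rewrite Hrec //; apply: bigmin_le_idx.
have pi_ge1 : forall t i, i \notin L -> 1 <= pi t i.
  move=> t i Hi; case: t => [|n]; first by rewrite H0.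
  rewrite Hrec //; apply: (big_ind (fun x => 1 <= x)) => //.
  by move=> x y Hx Hy; rewrite leq_min Hx Hy.
have Hmem : forall t i j, tbar - delta.+1 * D <= t <= tbar ->
    (j \in N t i :\ i) = (j \in N tbar i :\ i).
  move=> t i j Ht; rewrite !inE; have := Hwin t Ht j i.
  by rewrite /edge_rel => ->.
have claim : forall d, d <= D -> forall t, tbar - delta.+1 * (D - d) <= t <= tbar ->
    forall i, (h i <= d -> pi t i <= h i) /\ minn (h i) d.+1 <= pi t i.
  elim=> [|d IH] Hd t Ht i.
    split.
      by rewrite leqn0 => /eqP /(h0L Hpib) /HL ->.
    case: (boolP (i \in L)) => Hi.
      by rewrite /h (@hL _ e L pibar i Hi) /minn.
    apply: leq_trans (geq_minr _ _) (pi_ge1 t i Hi).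
  have HdD : d <= D by apply: ltnW.
  have [k Hk] : exists k, D - d = k.+1 by exists (D - d.+1); lia.
  have Hk' : D - d.+1 = k by lia.
  move: Ht; rewrite Hk' => Ht.
  have HM : delta.+1 * k.+1 <= tbar.
    apply: leq_trans Htb; rewrite leq_mul2l; apply/orP; right; lia.
  move: HM; rewrite mulnS => HM.
  have HDk : delta.+1 * k <= delta.+1 * D.
    by rewrite leq_mul2l; apply/orP; right; lia.
  have Htw : tbar - delta.+1 * D <= t <= tbar by lia.
  have Ht1 : 1 <= t by lia.
  have Hsub : forall j, j \in N t i :\ i ->
      tbar - delta.+1 * (D - d) <= t - dl t j i - 1 <= tbar.
    move=> j Hj; have [H1 H2] := Hdl t i j Ht1 Hj; rewrite Hk mulnS; lia.
  case: (boolP (i \in L)) => Hi.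
    by rewrite HL // /h (@hL _ e L pibar i Hi).
  split.
    move=> Hhi; have := @h_le _ e L pibar i; rewrite -/h leq_eqVlt => /orP [/eqP->|Hlt].
      exact: pi_le.
    have [j [Hji [Hej Hhj]]] := @hpred _ e L pibar i Hi Hlt; rewrite -/h in Hhj.
    have Hj : j \in N t i :\ i.
      by rewrite (Hmem t i j Htw) !inE Hji; exact: Hej.
    rewrite Hrec //; apply: leq_trans (bigmin_le _ _ _ _) _.
    - by rewrite mem_index_enum.
    - exact: Hj.
    have [Ha _] := IH HdD _ (Hsub j Hj) j.
    have Hjd : h j <= d by rewrite -ltnS; apply: leq_trans Hhj Hhi.
    by apply: leq_trans _ Hhj; rewrite ltnS; apply: Ha.
  rewrite Hrec //; apply: (big_ind (fun x => minn (h i) d.+2 <= x)).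
  - by apply: leq_trans (geq_minl _ _) (@h_le _ e L pibar i).
  - by move=> x y Hx Hy; rewrite leq_min Hx Hy.
  move=> j Hj.
  have [_ Hb] := IH HdD _ (Hsub j Hj) j.
  have Hej : e j i by move: Hj; rewrite (Hmem t i j Htw) !inE => /andP [_ Hx]; exact: Hx.
  have := @hedge _ e L pibar j i Hej; rewrite -/h; lia.
move=> i.
have [Ha Hb] := claim D (leqnn D) tbar ltac:(rewrite subnn muln0 subn0; lia) i.
rewrite -/e -/h; split.
  by move=> Hh; apply/eqP; rewrite eqn_leq Ha //; move: Hb; lia.
by move=> Hh; move: Hb; lia.
Qed.
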